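(* Let $X$ and $Y$ be uncertain variables on a common set $\Omega$ with finite ranges $[\![X]\!]$ and $[\![Y]\!]$. Then $$\mathcal{L}_\star(X\rightarrow Y)\leq \sup_{P}\ \widetilde{\mathcal{L}}_P(X\rightarrow Y)+H_0(X\mid Y),$$ where the supremum is over all conditional probability mass functions $P=(P(y\mid x))_{x\in[\![X]\!],\,y\in[\![Y]\!]}$ (i.e., $P(y\mid x)\ge 0$ and $\sum_{y\in[\![Y]\!]}P(y\mid x)=1$ for each $x$), and $\widetilde{\mathcal{L}}_P(X\rightarrow Y):=\log_2\Big(\sum_{y\in[\![Y]\!]}\max_{x\in[\![X]\!]}P(y\mid x)\Big)$ is the maximal stochastic leakage of the channel $P$.
   Context: Let $\Omega$ be a set. An uncertain variable (uv) is a map $X:\Omega\to\mathbb{X}$ into some set; all uvs considered have finite ranges. The range of $X$ is $[\![X]\!]:=\{X(\omega):\omega\in\Omega\}$; the conditional range is $[\![X\mid Y(\omega)=y]\!]:=\{X(\omega):\omega\in\Omega,\ Y(\omega)=y\}$. Conditional non-stochastic entropy: $H_0(X\mid Y):=\max_{y\in[\![Y]\!]}\log_2|[\![X\mid Y(\omega)=y]\!]|$. The non-stochastic brute-force guessing leakage from a uv $U$ to a uv $Y$ is $$\mathcal{L}(U\rightarrow Y):=\log_2\left(\frac{|[\![U]\!]|}{\min_{y\in[\![Y]\!]}|[\![U\mid Y(\omega)=y]\!]|}\right).$$ The maximal non-stochastic brute-force leakage from $X$ to $Y$ is $$\mathcal{L}_\star(X\rightarrow Y):=\sup_{g}\ \mathcal{L}(g\circ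 X\rightarrow Y),$$ where the supremum ranges over all finite sets $\mathcal{U}$ and all functions $g:[\![X]\!]\to\mathcal{U}$. *)

(* Defs.v *)
From HB Require Import structures.
From mathcomp Require Import all_boot all_order all_algebra.
From mathcomp Require Import boolp classical_sets reals exp.
Set Implicit Arguments. Unset Strict Implicit. Unset Printing Implicit Defensive.
Import Order.TTheory GRing.Theory Num.Theory.
Local Open Scope ring_scope.

Section Defs.
Variable R : realType.

Definition log2 (x : R) : R := ln x / ln 2.

Definition urange (Omega : Type) (T : finType) (X : Omega -> T) : {set T} :=
  finset (fun x => `[< exists w, X w = x >]).

Definition ucrange (Omega : Type) (TX TY : finType) (X : Omega -> TX)
  (Y : Omega -> TY) (y : TY) : {set TX} :=
  finset (fun x => `[< exists w, Y w = y /\ X w = x >]).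

Definition H0 (Omega : Type) (TX TY : finType) (X : Omega -> TX)
  (Y : Omega -> TY) : R :=
  \big[Num.max/0]_(y in urange Y) log2 #|ucrange X Y y|%:R.

Definition nleak (Omega : Type) (TU TY : finType) (U : Omega -> TU)
  (Y : Omega -> TY) : R :=
  log2 (#|urange U|%:R /
        (\big[minn/#|urange U|]_(y in urange Y) #|ucrange U Y y|)%:R).

Definition nleak_star (Omega : Type) (TX TY : finType) (X : Omega -> TX)
  (Y : Omega -> TY) : R :=
  sup [set l | exists (U : finType) (g : TX -> U), l = nleak (g \o X) Y]%classic.

(* P is a conditional pmf P(y|x), x in [[X]], y in [[Y]] (values outside
   these ranges are irrelevant) *)
Definition is_channel (Omega : Type) (TX TY : finType) (X : Omega -> TX)
  (Y : Omega -> TY) (P : TX -> TY -> R) : Prop :=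
  forall x, x \in urange X ->
    (forall y, y \in urange Y -> 0 <= P x y) /\
    \sum_(y in urange Y) P x y = 1.

Definition sleak (Omega : Type) (TX TY : finType) (X : Omega -> TX)
  (Y : Omega -> TY) (P : TX -> TY -> R) : R :=
  log2 (\sum_(y in urange Y) \big[Num.max/0]_(x in urange X) P x y).

Definition sup_sleak (Omega : Type) (TX TY : finType) (X : Omega -> TX)
  (Y : Omega -> TY) : R :=
  sup [set l | exists P : TX -> TY -> R, is_channel X Y P /\ l = sleak X Y P]%classic.

End Defs.

(* Main.v *)
Require Import Defs.
From HB Require Import structures.
From mathcomp Require Import all_boot all_order all_algebra.
From mathcomp Require Import boolp classical_sets reals exp.
Import Order.TTheory GRing.Theory Num.Theory.
Local Open Scope ring_scope.

Section Helpers.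
Context {R : realType}.

Lemma ln2_gt0 : 0 < ln (2 : R).
Proof. by apply: ln_gt0; rewrite ltr1n. Qed.

Lemma log2_le (a b : R) : 0 < a -> a <= b -> log2 a <= log2 b.
Proof.
move=> a0 ab; rewrite /log2; apply: ler_wpM2r.
  by rewrite invr_ge0 ltW // ln2_gt0.
by rewrite ler_ln // posrE // (lt_le_trans a0 ab).
Qed.

Lemma log2M (a b : R) : 0 < a -> 0 < b -> log2 (a * b) = log2 a + log2 b.
Proof. by move=> a0 b0; rewrite /log2 lnM ?posrE // mulrDl. Qed.

Lemma log2_ub (s : R) : 0 <= s -> log2 s <= s / ln 2.
Proof.
move=> s0; rewrite /log2; apply: ler_wpM2r.
  by rewrite invr_ge0 ltW // ln2_gt0.
have [s1|s1] := leP s 1; first by apply: le_trans (ln_le0 s1) s0.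
by apply: ltW; apply: ln_sublinear; apply: lt_trans s1.
Qed.

End Helpers.

Theorem proposition6 (R : realType) (Omega : Type) (TX TY : finType)
  (X : Omega -> TX) (Y : Omega -> TY) :
  nleak_star R X Y <= sup_sleak R X Y + H0 R X Y.
Proof.
have ln2 := @ln2_gt0 R.
have chub : forall P : TX -> TY -> R, is_channel X Y P -> sleak X Y P <= #|urange X|%:R / ln 2.
  move=> P chP; rewrite /sleak.
  have s0 : 0 <= \sum_(y in urange Y) \big[Num.max/0]_(x in urange X) P x y.
    apply: sumr_ge0 => y yY; elim/big_ind: _ => //.
      by move=> a b ha hb; rewrite le_max ha.
    by move=> x xX; case: (chP x xX) => H _; apply: H.
  apply: (le_trans (log2_ub _ s0)); apply: ler_wpM2r.
    by rewrite invr_ge0 ltW.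
  apply: (@le_trans _ _ (\sum_(y in urange Y) \sum_(x in urange X) P x y)).
    apply: ler_sum => y yY.
    have S0 : 0 <= \sum_(x in urange X) P x y.
      by apply: sumr_ge0 => x xX; case: (chP x xX) => + _; apply.
    elim/big_ind: _ => //; first by move=> a b ha hb; rewrite ge_max ha hb.
    move=> x xX; rewrite (bigD1 x) //= lerDl; apply: sumr_ge0.
    by move=> x' /andP[x'X _]; case: (chP x' x'X) => H _; apply: H.
  rewrite exchange_big /= (eq_bigr (fun _ => 1)); first by rewrite sumr_const.
  by move=> x xX; case: (chP x xX).
have supS : forall P : TX -> TY -> R, is_channel X Y P -> sleak X Y P <= sup_sleak R X Y.
  move=> P chP; apply: sup_upper_bound; last by exists P.
  split; first by exists (sleak X Y P), P.
  by exists (#|urange X|%:R / ln 2) => l [Q [chQ ->]]; apply: chub.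
have inU : forall (T : finType) (Z : Omega -> T) z,
    (z \in urange Z) = `[< exists w, Z w = z >].
  by move=> T Z z; rewrite /urange inE.
case: (pselect (exists w : Omega, True)) => [[w0 _]|nO]; last first.
  have ur : forall (T : finType) (Z : Omega -> T), urange Z = finset.set0.
    move=> T Z; apply/setP => z; rewrite inU finset.in_set0.
    by apply/asboolP => -[w _]; apply: nO; exists w.
  have -> : H0 R X Y = 0 by rewrite /H0 ur big_set0.
  rewrite addr0.
  have ch0 : is_channel X Y (fun _ _ => (0 : R)) by move=> x; rewrite ur finset.in_set0.
  apply: ge_sup.
    by exists (nleak R (@id TX \o X) Y), TX, id.
  move=> l [U [g ->]]; apply: le_trans (supS _ ch0).
  by rewrite /nleak /sleak !ur cards0 big_set0 big_set0 mul0r.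
pose h (x : TX) : TY := Y (match pselect (exists w, X w = x) with
  | left e => sval (cid e) | right _ => w0 end).
have hP : forall x, x \in urange X -> exists w, X w = x /\ Y w = h x.
  move=> x; rewrite inU => /asboolP e; rewrite /h.
  case: pselect => [e'|/(_ e) //].
  by case: (cid e') => w hw /=; exists w.
have hY : forall x, x \in urange X -> h x \in urange Y.
  by move=> x /hP [w [_ hw]]; rewrite inU; apply/asboolP; exists w.
pose P := fun x y => ((y == h x)%:R : R).
have chP : is_channel X Y P.
  move=> x xX; split => [y _|]; first by rewrite /P ler0n.
  rewrite (bigD1 (h x)) ?hY //= /P eqxx big1 ?addr0 //.
  by move=> y /andP[_ /negbTE ->].
have X0 : X w0 \in urange X by rewrite inU; apply/asboolP; exists w0.
pose K := #|h @: urange X|.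
have K0 : (0 < K)%N by apply/card_gt0P; exists (h (X w0)); apply: imset_f.
have sK : log2 (K%:R : R) <= sup_sleak R X Y.
  apply: le_trans (supS _ chP); rewrite /sleak; apply: log2_le.
    by rewrite ltr0n.
  have hsub : h @: urange X \subset urange Y.
    by apply/fintype.subsetP => y /imsetP [x xX ->]; apply: hY.
  rewrite (big_setID (h @: urange X)) /= (finset.setIidPr hsub).
  rewrite -[(K%:R : R)]addr0; apply: lerD.
    rewrite /K -sum1_card natr_sum; apply: ler_sum => y /imsetP [x xX ->].
    rewrite (bigD1 x) //= /P eqxx le_max lexx //.
  apply: sumr_ge0 => y _; elim/big_ind: _ => //.
    by move=> a b ha hb; rewrite le_max ha.
have Y0 : Y w0 \in urange Y by rewrite inU; apply/asboolP; exists w0.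
have [y0 y0Y y0max] := @eq_bigmax_cond _ (mem (urange Y))
  (fun y => #|ucrange X Y y|) (ltac:(apply/card_gt0P; exists (Y w0); exact: Y0)).
pose M := #|ucrange X Y y0|.
have Mmax : forall y, y \in urange Y -> (#|ucrange X Y y| <= M)%N.
  by move=> y yY; rewrite /M -y0max; apply: leq_bigmax_cond.
have M0 : (0 < M)%N.
  move: y0Y; rewrite inU => /asboolP [w Yw].
  by apply/card_gt0P; exists (X w); rewrite /ucrange inE; apply/asboolP; exists w.
have hH : log2 (M%:R : R) <= H0 R X Y.
  by rewrite /H0 (bigD1 y0) //= le_max lexx.
have hXK : (#|urange X| <= K * M)%N.
  rewrite -[#|urange X|]sum1_card (partition_big_imset h) /=.
  rewrite /K -sum_nat_const; apply: leq_sum => y /imsetP [x0 x0X ->].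
  rewrite sum1dep_card; apply: leq_trans (Mmax _ (hY _ x0X)).
  apply: subset_leq_card; apply/fintype.subsetP => x.
  rewrite inE => /andP [xX /eqP hx]; rewrite /ucrange inE; apply/asboolP.
  by have [w [Xw Yw]] := hP x xX; exists w; rewrite Yw hx.
have key : forall (U : finType) (g : TX -> U),
    nleak R (g \o X) Y <= log2 (K%:R : R) + log2 (M%:R : R).
  move=> U g; rewrite /nleak.
  have u0 : (0 < #|urange (g \o X)|)%N.
    by apply/card_gt0P; exists (g (X w0)); rewrite inU; apply/asboolP; exists w0.
  have uX : (#|urange (g \o X)| <= #|urange X|)%N.
    apply: leq_trans (leq_imset_card g (urange X)); apply: subset_leq_card.
    apply/fintype.subsetP => z; rewrite inU => /asboolP [w <-].
    by apply: imset_f; rewrite inU; apply/asboolP; exists w.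
  have m0 : (0 < \big[minn/#|urange (g \o X)|]_(y in urange Y)
                  #|ucrange (g \o X) Y y|)%N.
    elim/big_ind: _ => //; first by move=> a b ha hb; rewrite leq_min ha hb.
    move=> y; rewrite inU => /asboolP [w Yw]; apply/card_gt0P.
    by exists (g (X w)); rewrite /ucrange inE; apply/asboolP; exists w.
  rewrite -log2M ?ltr0n // -natrM; apply: log2_le.
    by rewrite divr_gt0 // ltr0n.
  rewrite ler_pdivrMr ?ltr0n // -natrM ler_nat.
  apply: leq_trans (leq_pmulr (K * M) m0).
  exact: leq_trans uX hXK.
apply: ge_sup; first by exists (nleak R (@id TX \o X) Y), TX, id.
move=> l [U [g ->]]; apply: le_trans (key U g) _.
by apply: lerD.
Qed.
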